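(* Let $c\geq 3$ be an integer. Then, as formal power series in $q$, $$\bar F_{c-1}(q)=\varphi(q)\prod_{i\geq 1}\varphi\big(q^{2^i}\big)^{c\cdot 2^{i-1}}.$$
   Context: For an integer $k\geq 1$ let $f_k:=\prod_{n\geq 1}(1-q^{kn})$. For an integer $c\geq1$, $\bar a_c(n)$ is defined by $\sum_{n\geq 0}\bar a_c(n)q^n=\dfrac{f_4^{c-1}}{f_1^2f_2^{2c-3}}$, and $\bar F_c(q):=\sum_{n\geq0}\bar a_c(n)q^n$. Ramanujan's $\varphi$-function is $\varphi(q):=\sum_{k=-\infty}^{\infty}q^{k^2}$. *)

(* Defs.v *)
(* Formal power series over int are represented by their
   coefficient functions  nat -> int. *)
From mathcomp Require Import all_boot all_order all_algebra.
Set Implicit Arguments. Unset Strict Implicit. Unset Printing Implicit Defensive.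
Import Order.TTheory GRing.Theory Num.Theory.
Local Open Scope ring_scope.

Definition ps := nat -> int.

Definition psmul (f g : ps) : ps :=
  fun n => \sum_(i < n.+1) f i * g (n - i)%N.
Definition ps1 : ps := fun n => if n == 0%N then 1 else 0.
Definition psexp (f : ps) (k : nat) : ps := iter k (psmul f) ps1.

(* multiplicative inverse of a series with constant term 1:
   g 0 = 1, g n = - sum_{i=1}^n f i * g (n-i). *)
Fixpoint inv_coefs (f : ps) (n : nat) : seq int :=
  match n with
  | 0 => [:: 1]
  | m.+1 => let s := inv_coefs f m in
            rcons s (- \sum_(1 <= i < m.+2) f i * nth 0 s (m.+1 - i)%N)
  end.
Definition psinv (f : ps) : ps := fun n => nth 0 (inv_coefs f n) n.

(* integer powers (negative powers via psinv; used only for series with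
   constant term 1) *)
Definition psexpz (f : ps) (z : int) : ps :=
  match z with
  | Posz k => psexp f k
  | Negz k => psinv (psexp f k.+1)
  end.

Definition dil (m : nat) (f : ps) : ps :=
  fun n => if (m %| n)%N then f (n %/ m)%N else 0.

(* the infinite product prod_{i >= 1} F i, for factors with
   F i = 1 + O(q^i) (so that coefficient N only depends on the factors
   i <= N+1). *)
Definition infprod (F : nat -> ps) : ps :=
  fun N => (\big[psmul/ps1]_(1 <= i < N.+2) F i) N.

Definition mono (e : nat) : ps := fun n => if n == e then 1 else 0.
Definition fk (k : nat) : ps :=
  infprod (fun n => fun m => ps1 m - mono (k * n) m).

Definition Fbar (c : nat) : ps :=
  psmul (psexp (fk 4) (c - 1))
        (psinv (psmul (psexp (fk 1) 2) (psexpz (fk 2) (2 * (c : int) - 3)))).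

(* Ramanujan's phi(q) = sum_{k in Z} q^{k^2}: coefficient n counts
   integers k (necessarily |k| <= n) with k^2 = n *)
Definition phi : ps :=
  fun n => (\sum_(j < (2 * n).+1) (((j : int) - (n : int)) ^+ 2 == (n : int)) : nat)%:Z.

(* Main.v *)
From HB Require Import structures.
Require Import Defs.
From mathcomp Require Import all_boot all_order all_algebra.
From mathcomp Require Import boolp zify ring lra.
Set Implicit Arguments. Unset Strict Implicit. Unset Printing Implicit Defensive.
Import Order.TTheory GRing.Theory Num.Theory.
Local Open Scope ring_scope.


Definition PS : Type := nat -> int.
HB.instance Definition _ := gen_eqMixin PS.
HB.instance Definition _ := gen_choiceMixin PS.

Definition psadd (f g : PS) : PS := fun n => f n + g n.
Definition psopp (f : PS) : PS := fun n => - f n.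
Definition ps0 : PS := fun _ => 0.

Lemma psaddA : associative psadd.
Proof. by move=> f g h; apply: funext => n; rewrite /psadd addrA. Qed.
Lemma psaddC : commutative psadd.
Proof. by move=> f g; apply: funext => n; rewrite /psadd addrC. Qed.
Lemma psadd0 : left_id ps0 psadd.
Proof. by move=> f; apply: funext => n; rewrite /psadd add0r. Qed.
Lemma psaddN : left_inverse ps0 psopp psadd.
Proof. by move=> f; apply: funext => n; rewrite /psadd /psopp addNr. Qed.

HB.instance Definition _ := GRing.isZmodule.Build PS psaddA psaddC psadd0 psaddN.

Definition T (N : nat) (f : PS) : {poly int} := \poly_(i < N.+1) f i.

Lemma coef_psmul (f g : PS) N n : (n <= N)%N ->
  psmul f g n = (T N f * T N g)`_n.
Proof.
move=> hn; rewrite coefM /psmul; apply: eq_bigr => i _.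
rewrite /T !coef_poly; have hi : (i < N.+1)%N by rewrite ltnS; apply: leq_trans hn; rewrite -ltnS.
rewrite hi ifT //; rewrite ltnS; apply: leq_trans (leq_subr _ _) hn.
Qed.

Lemma T_psmul (f g : PS) N i : (i <= N)%N -> (T N (psmul f g))`_i = (T N f * T N g)`_i.
Proof. by move=> hi; rewrite /T coef_poly ltnS hi; apply: coef_psmul. Qed.

Lemma psmulA : associative psmul.
Proof.
move=> f g h; apply: funext => n.
rewrite (coef_psmul _ _ (leqnn n)) [RHS](coef_psmul _ _ (leqnn n)).
have -> : (T n (psmul f g) * T n h)`_n = (T n f * T n g * T n h)`_n.
  rewrite !coefM; apply: eq_bigr => i _; congr (_ * _).
  by rewrite T_psmul // -ltnS ltn_ord.
have -> : (T n f * T n (psmul g h))`_n = (T n f * (T n g * T n h))`_n.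
  rewrite !coefM; apply: eq_bigr => i _; congr (_ * _).
  by rewrite T_psmul // leq_subr.
by rewrite mulrA.
Qed.

Lemma psmulC : commutative psmul.
Proof.
move=> f g; apply: funext => n.
by rewrite (coef_psmul _ _ (leqnn n)) [RHS](coef_psmul _ _ (leqnn n)) mulrC.
Qed.

Lemma ps1mul : left_id ps1 psmul.
Proof.
move=> f; apply: funext => n; rewrite /psmul big_ord_recl /= /ps1 /= mul1r subn0.
by rewrite big1 ?addr0 // => i _; rewrite mul0r.
Qed.

Lemma psmulDl : left_distributive psmul psadd.
Proof.
move=> f g h; apply: funext => n; rewrite /psmul /psadd -big_split /=.
by apply: eq_bigr => i _; rewrite mulrDl.
Qed.

Lemma ps10 : (ps1 : PS) != (0 : PS).
Proof. apply/eqP => /(congr1 (fun f : PS => f 0%N)); rewrite /ps1 /=; by []. Qed.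

HB.instance Definition _ := GRing.Zmodule_isComNzRing.Build PS psmulA psmulC ps1mul psmulDl ps10.

Lemma mulE (f g : PS) n : (f * g) n = \sum_(i < n.+1) f i * g (n - i)%N.
Proof. by []. Qed.
Lemma addE (f g : PS) n : (f + g) n = f n + g n. Proof. by []. Qed.
Lemma oppE (f : PS) n : (- f) n = - f n. Proof. by []. Qed.
Lemma oneE n : (1 : PS) n = (n == 0%N)%:R. Proof. by rewrite /= /ps1; case: n. Qed.
Lemma zeroE n : (0 : PS) n = 0. Proof. by []. Qed.


Lemma size_inv_coefs f n : size (inv_coefs f n) = n.+1.
Proof. by elim: n => //= n IH; rewrite size_rcons IH. Qed.

Lemma nth_inv_coefs f n k : (k <= n)%N -> nth 0 (inv_coefs f n) k = psinv f k.
Proof.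
elim: n => [|n IH]; first by rewrite leqn0 => /eqP ->.
rewrite leq_eqVlt => /orP [/eqP -> //|]; rewrite ltnS => hk /=.
by rewrite nth_rcons size_inv_coefs ltnS hk IH.
Qed.

Lemma psinvS f m : psinv f m.+1 =
  - \sum_(1 <= i < m.+2) f i * psinv f (m.+1 - i)%N.
Proof.
rewrite {1}/psinv /= nth_rcons size_inv_coefs ltnn eqxx; congr (- _).
rewrite !big_nat; apply: eq_bigr => i /andP [hi _].
by rewrite nth_inv_coefs //; lia.
Qed.

Lemma psinv0 f : psinv f 0 = 1. Proof. by []. Qed.

Lemma psinvK (f : PS) : f 0%N = 1 -> f * psinv f = 1.
Proof.
move=> f0; apply: funext => n; rewrite mulE oneE.
case: n => [|m]; first by rewrite big_ord1 f0 psinv0 mulr1.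
rewrite big_ord_recl /= f0 mul1r subn0 psinvS.
rewrite big_add1 /= big_mkord addNr //.
Qed.

Definition pscale (a : int) (f : PS) : PS := fun n => a * f n.

Lemma pscale_mul a (f g : PS) : pscale a f * g = f * pscale a g.
Proof.
apply: funext => n; rewrite !mulE; apply: eq_bigr => i _.
by rewrite /pscale; ring.
Qed.

Definition psunit : pred PS := fun f => f 0%N \is a GRing.unit.
Definition psinvr (f : PS) : PS :=
  if f 0%N \is a GRing.unit then pscale (f 0%N)^-1 (psinv (pscale (f 0%N)^-1 f)) else f.

Lemma psmulVr : {in psunit, left_inverse 1 psinvr *%R}.
Proof.
move=> f fu; have fu' : f 0%N \is a GRing.unit by exact: fu.
rewrite /psinvr fu'.
rewrite pscale_mul mulrC psinvK //.
by rewrite /pscale mulVr.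
Qed.

Lemma psunitPl (f g : PS) : g * f = 1 -> psunit f.
Proof.
move=> /(congr1 (fun h : PS => h 0%N)); rewrite mulE big_ord1 oneE /= => h.
by apply/unitrPr; exists (g 0%N); rewrite mulrC.
Qed.

Lemma psinvr_out : {in [predC psunit], psinvr =1 id}.
Proof.
move=> f; rewrite inE /= => h; have h' : f 0%N \isn't a GRing.unit by exact: h.
by rewrite /psinvr (negbTE h').
Qed.

HB.instance Definition _ := GRing.ComRing_hasMulInverse.Build PS psmulVr psunitPl psinvr_out.

Lemma unitE (f : PS) : (f \is a GRing.unit) = (f 0%N \is a GRing.unit).
Proof. by []. Qed.

Lemma psinvE (f : PS) : f 0%N = 1 -> psinv f = f^-1.
Proof.
move=> f0; have fu : f \is a GRing.unit by rewrite unitE f0 unitr1.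
apply: (mulrI fu); rewrite divrr // psinvK //.
Qed.


Definition eqN (N : nat) (f g : PS) := forall i, (i <= N)%N -> f i = g i.

Lemma eqN_refl N f : eqN N f f. Proof. by []. Qed.
Lemma eqN_sym N f g : eqN N f g -> eqN N g f.
Proof. by move=> h i hi; rewrite h. Qed.
Lemma eqN_trans N f g h : eqN N f g -> eqN N g h -> eqN N f h.
Proof. by move=> h1 h2 i hi; rewrite h1 ?h2. Qed.
Lemma eqN_le M N f g : (M <= N)%N -> eqN N f g -> eqN M f g.
Proof. by move=> hMN h i hi; rewrite h // (leq_trans hi). Qed.
Lemma eqN_eq f g : (forall N, eqN N f g) -> f = g.
Proof. by move=> h; apply: funext => n; apply: (h n). Qed.

Lemma eqND N f f' g g' : eqN N f f' -> eqN N g g' -> eqN N (f + g) (f' + g').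
Proof. by move=> h1 h2 i hi; rewrite !addE h1 ?h2. Qed.
Lemma eqNN N f f' : eqN N f f' -> eqN N (- f) (- f').
Proof. by move=> h1 i hi; rewrite !oppE h1. Qed.
Lemma eqNB N f f' g g' : eqN N f f' -> eqN N g g' -> eqN N (f - g) (f' - g').
Proof. by move=> h1 h2; apply: eqND => //; apply: eqNN. Qed.
Lemma eqNM N f f' g g' : eqN N f f' -> eqN N g g' -> eqN N (f * g) (f' * g').
Proof.
move=> h1 h2 i hi; rewrite !mulE; apply: eq_bigr => k _.
have hk : (k <= N)%N by apply: leq_trans hi; rewrite -ltnS.
by rewrite h1 // h2 // (leq_trans (leq_subr _ _) hi).
Qed.
Lemma eqNX N f f' k : eqN N f f' -> eqN N (f ^+ k) (f' ^+ k).
Proof. by move=> h; elim: k => [|k IH]; rewrite ?expr0 // !exprS; apply: eqNM. Qed.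
Lemma eqN_prod N I (r : seq I) (P : pred I) (F G : I -> PS) :
  (forall i, P i -> eqN N (F i) (G i)) ->
  eqN N (\prod_(i <- r | P i) F i) (\prod_(i <- r | P i) G i).
Proof. by move=> h; apply: big_ind2 => //; move=> *; apply: eqNM. Qed.
Lemma eqN_sum N I (r : seq I) (P : pred I) (F G : I -> PS) :
  (forall i, P i -> eqN N (F i) (G i)) ->
  eqN N (\sum_(i <- r | P i) F i) (\sum_(i <- r | P i) G i).
Proof. by move=> h; apply: big_ind2 => //; move=> *; apply: eqND. Qed.

Lemma eqN_subr0 N f g : eqN N (f - g) 0 -> eqN N f g.
Proof. by move=> h i hi; apply/eqP; rewrite -subr_eq0; apply/eqP; apply: h. Qed.
Lemma eqN_0subr N f g : eqN N f g -> eqN N (f - g) 0.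
Proof. by move=> h i hi; rewrite addE oppE h // subrr. Qed.

Lemma eqNV N f g : f \is a GRing.unit -> eqN N f g -> eqN N f^-1 g^-1.
Proof.
move=> fu h; have gu : g \is a GRing.unit.
  have : g 0%N \is a GRing.unit by rewrite -h //; exact: fu.
  by [].
apply: eqN_subr0.
have -> : f^-1 - g^-1 = f^-1 * g^-1 * (g - f).
  by rewrite mulrBr -[f^-1 * g^-1 * g]mulrA mulVr // mulr1 mulrAC mulVr // mul1r.
rewrite -(mulr0 (f^-1 * g^-1)); apply: eqNM => //; apply: eqN_0subr; exact: eqN_sym.
Qed.

Definition q : PS := mono 1.

Lemma monoM k (f : PS) n : ((mono k : PS) * f) n = if (k <= n)%N then f (n - k)%N else 0.
Proof.
rewrite mulE; case: leqP => hk.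
  have hk' : (k < n.+1)%N by rewrite ltnS.
  rewrite (bigD1 (Ordinal hk')) //= big1 ?addr0 /mono ?eqxx ?mul1r //.
  by move=> i hi; rewrite ifF ?mul0r //; apply/negbTE; rewrite -val_eqE /= in hi.
by rewrite big1 // => i _; rewrite /mono ifF ?mul0r //; apply/negbTE; rewrite neq_ltn (leq_trans (ltn_ord i)).
Qed.

Lemma monoE k : (mono k : PS) = q ^+ k.
Proof.
elim: k => [|k IH].
  by apply: funext => n; rewrite expr0 oneE /mono; case: n.
rewrite exprS -IH; apply: funext => n; rewrite monoM.
rewrite /mono; case: n => [|n] //=; rewrite subSS subn0 //.
Qed.

Lemma coef_qXM k (f : PS) n : (q ^+ k * f) n = if (k <= n)%N then f (n - k)%N else 0.
Proof. by rewrite -monoE monoM. Qed.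

Lemma coef_qX k n : (q ^+ k : PS) n = (n == k)%:R.
Proof. by rewrite -monoE /mono; case: eqP. Qed.

Lemma eqN_qXM N k f : (N < k)%N -> eqN N (q ^+ k * f) 0.
Proof. by move=> hk i hi; rewrite coef_qXM ifF //; apply/negbTE; rewrite -ltnNge; apply: leq_ltn_trans hk. Qed.

Lemma eqN_1qX N k : (N < k)%N -> eqN N (1 - q ^+ k) 1.
Proof.
move=> hk i hi; rewrite addE oppE coef_qX.
have -> : (i == k) = false by apply/negbTE; rewrite neq_ltn (leq_ltn_trans hi hk).
by rewrite subr0.
Qed.
Lemma eqN_1qX' N k : (N < k)%N -> eqN N (1 + q ^+ k) 1.
Proof.
move=> hk i hi; rewrite addE coef_qX.
have -> : (i == k) = false by apply/negbTE; rewrite neq_ltn (leq_ltn_trans hi hk).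
by rewrite addr0.
Qed.

Lemma qXM_inj k (f g : PS) : q ^+ k * f = q ^+ k * g -> f = g.
Proof.
move=> h; apply: funext => n; move: (congr1 (fun h : PS => h (n + k)%N) h).
by rewrite !coef_qXM leq_addl addnK.
Qed.


Lemma coefM_eq n (p p' r r' : {poly int}) :
  (forall i, (i <= n)%N -> p`_i = p'`_i) -> (forall i, (i <= n)%N -> r`_i = r'`_i) ->
  (p * r)`_n = (p' * r')`_n.
Proof.
move=> h1 h2; rewrite !coefM; apply: eq_bigr => i _.
by rewrite h1 ?h2 // ?leq_subr // -ltnS.
Qed.

Lemma T_dil m N (f : PS) i : (0 < m)%N -> (i <= N)%N ->
  (T N (dil m f))`_i = ((T N f) \Po 'X^m)`_i.
Proof.
move=> hm hi; rewrite coef_comp_poly_Xn // /T !coef_poly ltnS hi /dil.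
case: ifP => // hd; rewrite ltnS (leq_trans _ hi) //; exact: leq_div.
Qed.

Lemma dilM m (f g : PS) : (0 < m)%N -> (dil m (f * g) : PS) = (dil m f : PS) * (dil m g : PS).
Proof.
move=> hm; apply: funext => n.
rewrite [RHS](coef_psmul _ _ (leqnn n)).
rewrite (@coefM_eq n _ ((T n f) \Po 'X^m) _ ((T n g) \Po 'X^m)); last first.
- by move=> i hi; rewrite T_dil.
- by move=> i hi; rewrite T_dil.
rewrite -comp_polyM coef_comp_poly_Xn // /dil; case: ifP => // hd.
have -> : (f * g) (n %/ m)%N = (T n f * T n g)`_(n %/ m) by apply: coef_psmul; apply: leq_div.
by [].
Qed.

Lemma dil1 m : (0 < m)%N -> (dil m (1 : PS) : PS) = 1.
Proof.
move=> hm; apply: funext => n; rewrite /dil !oneE.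
case: ifP => hd.
  by rewrite -(divnK hd) mulnK // muln_eq0 (gtn_eqF hm) orbF.
by case: n hd => //; rewrite dvdn0.
Qed.

Lemma dilD m (f g : PS) : (dil m (f + g) : PS) = (dil m f : PS) + (dil m g : PS).
Proof. by apply: funext => n; rewrite addE /dil; case: ifP => //; rewrite addr0. Qed.
Lemma dilN m (f : PS) : (dil m (- f) : PS) = - (dil m f : PS).
Proof. by apply: funext => n; rewrite oppE /dil; case: ifP => //; rewrite oppr0. Qed.
Lemma dilB m (f g : PS) : (dil m (f - g) : PS) = (dil m f : PS) - (dil m g : PS).
Proof. by rewrite dilD dilN. Qed.

Lemma dil_qX m k : (0 < m)%N -> (dil m (q ^+ k) : PS) = q ^+ (m * k).
Proof.
move=> hm; apply: funext => n; rewrite /dil !coef_qX.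
case: ifP => hd.
  by rewrite -[in RHS](divnK hd) [(_ * m)%N]mulnC eqn_pmul2l.
case: eqP => // h; move: hd; by rewrite h dvdn_mulr.
Qed.

Lemma dilX m (f : PS) k : (0 < m)%N -> (dil m (f ^+ k) : PS) = (dil m f : PS) ^+ k.
Proof.
move=> hm; elim: k => [|k IH]; first by rewrite !expr0 dil1.
by rewrite !exprS dilM // IH.
Qed.

Lemma dil_prod m I (r : seq I) (P : pred I) (F : I -> PS) : (0 < m)%N ->
  (dil m (\prod_(i <- r | P i) F i) : PS) = \prod_(i <- r | P i) (dil m (F i) : PS).
Proof.
move=> hm; elim: r => [|x r IH]; first by rewrite !big_nil dil1.
by rewrite !big_cons; case: (P x); rewrite ?dilM // IH.
Qed.

Lemma dilV m (f : PS) : (0 < m)%N -> f \is a GRing.unit ->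
  (dil m (f^-1) : PS) = (dil m f : PS)^-1.
Proof.
move=> hm fu.
have du : (dil m f : PS) \is a GRing.unit.
  have : (dil m f : PS) 0%N \is a GRing.unit by rewrite /dil dvdn0 div0n; exact: fu.
  by [].
apply: (mulrI du); rewrite divrr // -dilM // divrr // dil1 //.
Qed.


Definition poch (a k : nat) : PS := \prod_(1 <= i < k.+1) (1 - q ^+ (a * i)).

Lemma infprodE (F : nat -> PS) N : infprod F N = (\prod_(1 <= i < N.+2) F i) N.
Proof. by []. Qed.

Lemma prod_ext n c b (F : nat -> PS) : (1 <= c <= b)%N ->
  (forall i, (c <= i)%N -> eqN n (F i) 1) ->
  eqN n (\prod_(1 <= i < c) F i) (\prod_(1 <= i < b) F i).
Proof.
move=> /andP [h1 h2] h; rewrite [X in eqN _ _ X](big_cat_nat h1 h2) /= -{1}(mulr1 (\prod_(1 <= i < c) F i)).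
apply: eqNM => //; apply: (@eqN_trans _ _ (\prod_(c <= i < b) (1:PS))); first by rewrite big1.
rewrite big_nat_cond [in X in eqN _ _ X]big_nat_cond; apply: eqN_prod => i /andP [/andP [hi _] _].
exact: eqN_sym (h i hi).
Qed.

Lemma fk_factor k : (fun n => fun m => ps1 m - mono (k * n) m) = (fun n => 1 - q ^+ (k * n) : PS).
Proof.
apply: funext => n; apply: funext => m; rewrite addE oppE -monoE oneE /ps1.
by case: m.
Qed.

Lemma fk_poch a N M : (0 < a)%N -> (N <= M)%N -> eqN N (fk a) (poch a M).
Proof.
move=> ha hNM n hn; rewrite /fk fk_factor infprodE.
have h : forall b, (n.+1 <= b)%N -> eqN n (\prod_(1 <= i < n.+1) (1 - q ^+ (a * i)) : PS)
           (\prod_(1 <= i < b) (1 - q ^+ (a * i))).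
  move=> b hb; apply: prod_ext; first by rewrite hb.
  move=> i hi; apply: eqN_1qX; apply: leq_trans hi _; rewrite leq_pmull //.
rewrite -(h n.+2) // /poch -(h M.+1) //; by rewrite ltnS (leq_trans hn).
Qed.

Lemma eqN_dil m N f g : (0 < m)%N -> eqN N f g -> eqN N (dil m f) (dil m g).
Proof.
move=> hm h i hi; rewrite /dil; case: ifP => // _; apply: h.
exact: leq_trans (leq_div _ _) hi.
Qed.

Lemma dil_poch m a M : (0 < m)%N -> (dil m (poch a M) : PS) = poch (m * a) M.
Proof.
move=> hm; rewrite /poch dil_prod //; apply: eq_bigr => i _.
by rewrite dilB dil1 // dil_qX // mulnA.
Qed.

Lemma dil_fk m a : (0 < m)%N -> (0 < a)%N -> (dil m (fk a) : PS) = fk (m * a)%N.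
Proof.
move=> hm ha; apply: eqN_eq => N.
apply: (@eqN_trans _ _ (dil m (poch a N))); first by apply: eqN_dil => //; apply: fk_poch.
rewrite dil_poch //; apply: eqN_sym; apply: fk_poch => //; by rewrite muln_gt0 hm.
Qed.

Lemma fk0 a : (0 < a)%N -> fk a 0%N = 1.
Proof.
move=> ha; rewrite (@fk_poch a 0 0) //. by rewrite /poch big_geq.
Qed.

Lemma fk_unit a : (0 < a)%N -> (fk a : PS) \is a GRing.unit.
Proof. move=> ha; have : (fk a : PS) 0%N \is a GRing.unit by rewrite fk0 // unitr1. by []. Qed.


Fixpoint qbin (n k : nat) {struct n} : PS :=
  match n, k with
  | 0, 0 => 1
  | 0, _.+1 => 0
  | n'.+1, 0 => 1
  | n'.+1, k'.+1 => qbin n' k' + q ^+ (2 * k'.+1) * qbin n' k'.+1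
  end.

Lemma qbin0 n : qbin n 0 = 1. Proof. by case: n. Qed.
Lemma qbinS n k : qbin n.+1 k.+1 = qbin n k + q ^+ (2 * k.+1) * qbin n k.+1.
Proof. by []. Qed.
Lemma qbin_gt n k : (n < k)%N -> qbin n k = 0.
Proof.
elim: n k => [|n IH] [|k] //= hk.
by rewrite !IH ?mulr0 ?addr0 // ltnW.
Qed.

Lemma pochS a k : poch a k.+1 = poch a k * (1 - q ^+ (a * k.+1)).
Proof. by rewrite /poch big_nat_recr. Qed.
Lemma poch0 a : poch a 0 = 1.
Proof. by rewrite /poch big_geq. Qed.

Lemma poch_eqN0 a k : (0 < a)%N -> eqN 0 (poch a k) 1.
Proof.
move=> ha; apply: (@eqN_trans _ _ (\prod_(1 <= i < k.+1) (1:PS))); last by rewrite big1.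
rewrite /poch big_nat_cond [X in eqN _ _ X]big_nat_cond.
apply: eqN_prod => i /andP [/andP [hi _] _]; apply: eqN_1qX; by rewrite muln_gt0 ha.
Qed.
Lemma poch_unit a k : (0 < a)%N -> poch a k \is a GRing.unit.
Proof.
move=> ha; have : (poch a k) 0%N \is a GRing.unit by rewrite (poch_eqN0 k ha) // oneE unitr1.
by [].
Qed.

Lemma qbin_poch m k : (k <= m)%N -> qbin m k * poch 2 k * poch 2 (m - k) = poch 2 m.
Proof.
elim: m k => [|m IH] [|k] //.
- by rewrite /= !poch0 !mulr1.
- by move=> _; rewrite qbin0 poch0 subn0 mulr1; exact: mul1r.
rewrite ltnS => hk; rewrite qbinS subSS.
have e1 : qbin m k * poch 2 k.+1 * poch 2 (m - k) = (1 - q ^+ (2 * k.+1)) * poch 2 m.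
  by rewrite pochS -(IH k hk); ring.
case: (ltngtP k m) hk => // [hkm|ekm] _; last first.
  subst k.
  rewrite !mulrDl e1 qbin_gt // mulr0 mul0r mul0r addr0 pochS; ring.
  have e2 : q ^+ (2 * k.+1) * qbin m k.+1 * poch 2 k.+1 * poch 2 (m - k) =
            q ^+ (2 * k.+1) * (1 - q ^+ (2 * (m - k))) * poch 2 m.
    have ep : poch 2 (m - k) = poch 2 (m - k.+1) * (1 - q ^+ (2 * (m - k))).
      have -> : (m - k = (m - k.+1).+1)%N by lia. rewrite pochS. reflexivity.
    rewrite ep -(IH k.+1 hkm); ring.
  rewrite !mulrDl e1 e2 pochS.
  have -> : q ^+ (2 * m.+1) = q ^+ (2 * k.+1) * q ^+ (2 * (m - k)) by rewrite -exprD; congr (_ ^+ _); lia.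
  ring.
Qed.


Lemma pascal2 n j : qbin n.+1 j.+1 = q ^+ (2 * (n - j)) * qbin n j + qbin n j.+1.
Proof.
case: (leqP j n) => hj; last first.
  rewrite (qbin_gt (n := n.+1)) ?ltnS // (qbin_gt (n := n) (k := j)) //.
  rewrite (qbin_gt (n := n) (k := j.+1)) ?mulr0 ?addr0 //; exact: ltnW.
have D u : u * (poch 2 j.+1 * poch 2 (n - j)) = qbin n.+1 j.+1 * (poch 2 j.+1 * poch 2 (n - j)) -> 
  qbin n.+1 j.+1 = u.
  move=> h; apply: (mulIr (x := poch 2 j.+1 * poch 2 (n - j))).
    by rewrite unitrM !poch_unit.
  by rewrite h.
apply: D; rewrite [RHS]mulrA.
have -> : qbin n.+1 j.+1 * poch 2 j.+1 * poch 2 (n - j) = poch 2 n.+1.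
  by rewrite -(@qbin_poch n.+1 j.+1) ?subSS.
rewrite mulrDl.
have e1 : q ^+ (2 * (n - j)) * qbin n j * (poch 2 j.+1 * poch 2 (n - j)) =
          q ^+ (2 * (n - j)) * (1 - q ^+ (2 * j.+1)) * poch 2 n.
  by rewrite pochS -(qbin_poch hj); ring.
have e2 : qbin n j.+1 * (poch 2 j.+1 * poch 2 (n - j)) = (1 - q ^+ (2 * (n - j))) * poch 2 n.
  case: (ltngtP j n) hj => // [hjn|ejn] _; last first.
    by subst j; rewrite qbin_gt // subnn expr0 subrr !mul0r.
  have ep : poch 2 (n - j) = poch 2 (n - j.+1) * (1 - q ^+ (2 * (n - j))).
    have -> : (n - j = (n - j.+1).+1)%N by lia.
    rewrite pochS; reflexivity.
  rewrite ep -(qbin_poch hjn); ring.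
rewrite e1 e2 pochS.
have -> : q ^+ (2 * n.+1) = q ^+ (2 * (n - j)) * q ^+ (2 * j.+1) by rewrite -exprD; congr (_ ^+ _); lia.
ring.
Qed.

Lemma pascal3 K j : qbin K.+2 j.+2 =
  q ^+ (2 * (K - j)) * qbin K j + (1 + q ^+ (2 * K.+1)) * qbin K j.+1 + q ^+ (2 * j.+2) * qbin K j.+2.
Proof.
rewrite pascal2 !qbinS subSS.
case: (leqP j K) => hj.
  have -> : q ^+ (2 * K.+1) = q ^+ (2 * (K - j)) * q ^+ (2 * j.+1) by rewrite -exprD; congr (_ ^+ _); lia.
  ring.
rewrite (qbin_gt (n := K) (k := j.+1)) ?mulr0; last by apply: ltnW.
ring.
Qed.

Lemma pascal_1 K : qbin K.+2 1 = (1 + q ^+ (2 * K.+1)) * qbin K 0 + q ^+ 2 * qbin K 1.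
Proof.
rewrite pascal2 !qbinS !qbin0 subn0 mulr1.
have -> : q ^+ (2 * 1) = q ^+ 2 by [].
ring.
Qed.

Fixpoint jt (n j : nat) {struct n} : PS :=
  match n with
  | 0 => (j == 0)%:R
  | n'.+1 => q ^+ (2 * n').+1 * jt n' j
           + (1 + q ^+ (2 * (2 * n').+1)) * (match j with 0 => 0 | j'.+1 => jt n' j' end)
           + q ^+ (2 * n').+1 * (match j with j''.+2 => jt n' j'' | _ => 0 end)
  end.

Lemma jt_gt n j : (2 * n < j)%N -> jt n j = 0.
Proof.
elim: n j => [|n IH] j hj /=; first by case: j hj.
rewrite IH; last by lia.
case: j hj => [|[|j]] hj; first by lia. by lia.
by rewrite !IH ?mulr0 ?addr0 //; lia.
Qed.

Lemma qmerge a b (F : PS) : q ^+ a * (q ^+ b * F) = q ^+ (a + b) * F.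
Proof. by rewrite mulrA -exprD. Qed.
Lemma qsplitE a b c (F : PS) : (a = b + c)%N -> q ^+ a * F = q ^+ b * (q ^+ c * F).
Proof. by move=> ->; rewrite qmerge. Qed.
Lemma qeq a b (F : PS) : a = b -> q ^+ a * F = q ^+ b * F.
Proof. by move=> ->. Qed.

Lemma jt_closed n j : q ^+ (2 * j * n) * jt n j = q ^+ (j * j + n * n) * qbin (2 * n) j.
Proof.
elim: n j => [|n IH] j.
  by case: j => [|j] /=; rewrite ?mulr0 //.
have eK : (2 * n.+1 = (2 * n).+2)%N by lia.
case: j => [|[|j2]].
-
  have I0 := IH 0%N; rewrite mul0n expr0 mul1r qbin0 mulr1 in I0.
  rewrite /= muln0 mul0n expr0 mul1r I0 !mulr0 !addr0 mulr1.
  rewrite -exprD; congr (_ ^+ _); lia.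
-
  have I0 := IH 0%N; rewrite mul0n expr0 mul1r qbin0 mulr1 in I0.
  have I1 := IH 1%N.
  rewrite eK pascal_1 qbin0 /= mulr0 addr0 I0 mulr1.
  rewrite mulrDr mulrA -exprD (qsplitE (b := (2 * 1 + (2 * n).+1)%N) (c := (2 * 1 * n)%N)); last by lia.
  rewrite I1 qmerge mulrDr.
  have E1 : q ^+ (2 * 1 + (2 * n).+1 + (1 * 1 + n * n)) = q ^+ 4 * (q ^+ n) ^+ 2 * q ^+ (n * n).
    by rewrite -exprM -!exprD; congr (_ ^+ _); lia.
  have E2 : q ^+ (2 * n).+2 = q ^+ 2 * (q ^+ n) ^+ 2.
    by rewrite -exprM -!exprD; congr (_ ^+ _); lia.
  have E4 : q ^+ (1 * 1 + n.+1 * n.+1) = q ^+ 2 * (q ^+ n) ^+ 2 * q ^+ (n * n).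
    by rewrite -exprM -!exprD; congr (_ ^+ _); lia.
  rewrite E1 E2 E4 add0n; ring.
-
  case: (leqP j2 (2 * n)) => hj; last first.
    rewrite jt_gt ?qbin_gt ?mulr0 //; lia.
  rewrite eK pascal3 /=.
  have T2 : q ^+ (2 * j2.+2 * n.+1) * (q ^+ (2 * n).+1 * jt n j2.+2) =
            q ^+ (j2.+2 * j2.+2 + n.+1 * n.+1 + 2 * j2.+2) * qbin (2 * n) j2.+2.
    rewrite qmerge (qsplitE (b := (2 * j2.+2 + (2 * n).+1)%N) (c := (2 * j2.+2 * n)%N)); last by nia.
    rewrite IH qmerge; apply: qeq; nia.
  have T1 : q ^+ (2 * j2.+2 * n.+1) * ((1 + q ^+ (2 * (2 * n).+1)) * jt n j2.+1) =
            (q ^+ (j2.+2 * j2.+2 + n.+1 * n.+1) + q ^+ (j2.+2 * j2.+2 + n.+1 * n.+1 + 2 * (2 * n).+1)) * qbin (2 * n) j2.+1.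
    rewrite mulrA mulrDr mulr1 -exprD mulrDl.
    rewrite (qsplitE (a := (2 * j2.+2 * n.+1)%N) (b := (2 * n + 2 * j2.+2)%N) (c := (2 * j2.+1 * n)%N)); last by nia.
    rewrite (qsplitE (a := (2 * j2.+2 * n.+1 + 2 * (2 * n).+1)%N) (b := (2 * n + 2 * j2.+2 + 2 * (2 * n).+1)%N) (c := (2 * j2.+1 * n)%N)); last by nia.
    rewrite IH !qmerge mulrDl; congr (_ + _); apply: qeq; nia.
  have T0 : q ^+ (2 * j2.+2 * n.+1) * (q ^+ (2 * n).+1 * jt n j2) =
            q ^+ (j2.+2 * j2.+2 + n.+1 * n.+1 + 2 * (2 * n - j2)) * qbin (2 * n) j2.
    rewrite qmerge (qsplitE (b := (2 * j2.+2 + 4 * n + (2 * n).+1)%N) (c := (2 * j2 * n)%N)); last by nia.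
    rewrite IH qmerge; apply: qeq; nia.
  rewrite !mulrDr T2 T1 T0 !qmerge mulrA mulrDr mulr1 -exprD.
  ring.
Qed.


Definition Sj n : PS := \sum_(j < (2 * n).+1) jt n j.
Definition Eo n : PS := \prod_(i < n) (1 + q ^+ (2 * i).+1).

Lemma Sj_rec n : Sj n.+1 = (1 + q ^+ (2 * n).+1) ^+ 2 * Sj n.
Proof.
rewrite /Sj /=.
have eK : ((2 * n.+1).+1 = (2 * n).+3)%N by lia.
rewrite eK big_split big_split /= -!mulr_sumr.
have A : \sum_(i < (2 * n).+3) jt n i = \sum_(j < (2 * n).+1) jt n j.
  by rewrite big_ord_recr big_ord_recr /= !jt_gt ?addr0 //=; lia.
have B : \sum_(i < (2 * n).+3) (match nat_of_ord i with 0 => 0 | j'.+1 => jt n j' end) =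
         \sum_(j < (2 * n).+1) jt n j.
  by rewrite big_ord_recl /= add0r big_ord_recr /= jt_gt ?addr0 //=; lia.
have C : \sum_(i < (2 * n).+3) (match nat_of_ord i with j''.+2 => jt n j'' | _ => 0 end) =
         \sum_(j < (2 * n).+1) jt n j.
  by rewrite big_ord_recl /= add0r big_ord_recl /= add0r.
rewrite A B C.
have -> : q ^+ (2 * (2 * n).+1) = (q ^+ (2 * n).+1) ^+ 2 by rewrite -exprM mulnC.
ring.
Qed.

Lemma Sj_Eo n : Sj n = Eo n ^+ 2.
Proof.
elim: n => [|n IH]; first by rewrite /Sj /Eo big_ord1 big_ord0 expr1n.
by rewrite Sj_rec IH /Eo big_ord_recr /=; ring.
Qed.


Definition ex (n j : nat) : nat := ((n - j) ^ 2 + (j - n) ^ 2)%N.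

Lemma ex_eq j n : (j * j + n * n = 2 * j * n + ex n j)%N.
Proof. rewrite /ex; case: (leqP j n) => h; nia. Qed.

Lemma ex_int (j n : nat) : ((j : int) - (n : int)) ^+ 2 = (ex n j : int).
Proof. rewrite /ex; case: (leqP j n) => h; rewrite GRing.expr2; nia. Qed.

Lemma jt_ex n j : jt n j = q ^+ (ex n j) * qbin (2 * n) j.
Proof.
apply: (@qXM_inj (2 * j * n)); rewrite jt_closed qmerge -ex_eq //.
Qed.

Lemma qbin_ex n j : (j <= n)%N -> qbin n j = poch 2 n * (poch 2 j)^-1 * (poch 2 (n - j))^-1.
Proof.
move=> hj; rewrite -(qbin_poch hj) [qbin n j * _ * _]mulrAC mulrK ?mulrK //; exact: poch_unit.
Qed.

Lemma qbin_approx N n j : (N <= j)%N -> (N <= n - j)%N -> (j <= n)%N ->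
  eqN N (qbin n j) ((fk 2 : PS)^-1).
Proof.
move=> h1 h2 hj; rewrite qbin_ex //.
have P M : (N <= M)%N -> eqN N (poch 2 M) (fk 2) by move=> hM; apply: eqN_sym; apply: fk_poch.
have -> : (fk 2 : PS)^-1 = (fk 2 : PS) * (fk 2 : PS)^-1 * (fk 2 : PS)^-1.
  by rewrite divrr ?mul1r // fk_unit.
apply: eqNM; first apply: eqNM.
- apply: P; apply: leq_trans h1 hj.
- by apply: eqNV; [exact: poch_unit | exact: P].
- by apply: eqNV; [exact: poch_unit | exact: P].
Qed.

Lemma jt_approx N n j : (2 * N <= n)%N -> (j <= 2 * n)%N ->
  eqN N (jt n j) (q ^+ (ex n j) * (fk 2 : PS)^-1).
Proof.
move=> hn hj; rewrite jt_ex.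
case: (leqP (ex n j) N) => he; last first.
  by apply: (@eqN_trans _ _ 0); [|apply: eqN_sym]; apply: eqN_qXM.
apply: eqNM => //; apply: qbin_approx.
- move: he; rewrite /ex; case: (leqP j n) => h; nia.
- move: he; rewrite /ex; case: (leqP j n) => h; nia.
- by [].
Qed.

Lemma coef_sum I (r : seq I) (P : pred I) (F : I -> PS) i :
  (\sum_(j <- r | P j) F j) i = \sum_(j <- r | P j) F j i.
Proof. by apply: (big_morph (fun f : PS => f i)) => //; move=> *; rewrite addE. Qed.

Lemma shrink (i : nat) (G : int -> nat) : (forall t : int, (i < `|t|)%N -> G t = 0%N) ->
  forall k, \sum_(j < (2 * (i + k)).+1) G ((j : int) - (((i + k)%N : nat) : int)) =
             \sum_(j < (2 * i).+1) G ((j : int) - (i : int)).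
Proof.
move=> hG; elim=> [|k IH]; first by rewrite addn0.
have eK : ((2 * (i + k.+1)).+1 = (2 * (i + k)).+3)%N by lia.
rewrite eK big_ord_recl big_ord_recr /= -IH hG; last by lia.
rewrite hG; last by rewrite /bump leq0n add1n; lia.
rewrite add0r addr0; apply: eq_bigr => j _; congr G; rewrite /bump leq0n add1n; lia.
Qed.

Lemma phi_sum N n : (N <= n)%N -> eqN N (\sum_(j < (2 * n).+1) q ^+ (ex n j)) phi.
Proof.
move=> hn i hi; rewrite coef_sum.
have -> : \sum_(j < (2 * n).+1) (q ^+ (ex n j) : PS) i =
          ((\sum_(j < (2 * n).+1) ((((j : int) - (n : int)) ^+ 2 == (i : int)) : nat)) : int).
  rewrite -natz natr_sum; apply: eq_bigr => j _; rewrite coef_qX ex_int eqz_nat eq_sym.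
  by case: (ex n j == i).
rewrite /phi; congr Posz.
have -> : n = (i + (n - i))%N by lia.
rewrite (shrink (G := fun t : int => (t ^+ 2 == (i : int)) : nat)) //.
move=> t ht; apply/eqP; rewrite eqb0; apply/negP => /eqP h.
have : (`|t| * `|t| = i)%N by apply/eqP; rewrite -(eqz_nat) PoszM abszE -normrM -GRing.expr2 h.
nia.
Qed.


Lemma Eo_id M : Eo M * poch 1 (2 * M) * poch 4 M = poch 2 (2 * M) * poch 2 M.
Proof.
elim: M => [|M IH]; first by rewrite /Eo big_ord0 !poch0 !mulr1.
have e2 : (2 * M.+1 = (2 * M).+2)%N by lia.
rewrite e2 /Eo big_ord_recr /= !pochS.
rewrite /Eo in IH.
set E := \prod_(i < M) _ in IH *.
set x := q ^+ (2 * M).+1.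
have h1 : q ^+ (1 * (2 * M).+1) = x by rewrite mul1n.
have h2 : q ^+ (1 * (2 * M).+2) = x * q by rewrite mul1n exprS mulrC.
have h3 : q ^+ (4 * M.+1) = x ^+ 2 * q ^+ 2 by rewrite /x -exprM -exprD; congr (_ ^+ _); lia.
have h4 : q ^+ (2 * (2 * M).+1) = x ^+ 2 by rewrite /x -exprM mulnC.
have h5 : q ^+ (2 * (2 * M).+2) = x ^+ 2 * q ^+ 2 by rewrite /x -exprM -exprD; congr (_ ^+ _); lia.
have h6 : q ^+ (2 * M.+1) = x * q by rewrite /x -exprSr; congr (_ ^+ _); lia.
rewrite h1 h2 h3 h4 h5 h6.
transitivity ((E * poch 1 (2 * M) * poch 4 M) * ((1 + x) * (1 - x) * (1 - x * q) * (1 - x ^+ 2 * q ^+ 2))).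
  ring.
rewrite IH; ring.
Qed.

Definition f1 : PS := fk 1.
Definition f2 : PS := fk 2.
Definition f4 : PS := fk 4.

Lemma Sj_approx N n : (2 * N <= n)%N -> eqN N (Sj n) ((phi : PS) * f2^-1).
Proof.
move=> hn; rewrite /Sj.
apply: (@eqN_trans _ _ (\sum_(j < (2 * n).+1) (q ^+ (ex n j) * f2^-1))).
  apply: eqN_sum => j _; apply: jt_approx => //; by rewrite -ltnS.
rewrite -mulr_suml; apply: eqNM => //; apply: phi_sum; lia.
Qed.

Lemma Eo_approx N M : (N <= M)%N -> eqN N (Eo M) (f2 ^+ 2 * f1^-1 * f4^-1).
Proof.
move=> hM.
have -> : Eo M = poch 2 (2 * M) * poch 2 M * (poch 1 (2 * M))^-1 * (poch 4 M)^-1.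
  by rewrite -Eo_id [Eo M * _ * _]mulrAC mulrK ?mulrK // poch_unit.
have P a K : (0 < a)%N -> (N <= K)%N -> eqN N (poch a K) (fk a) by move=> ha hK; apply: eqN_sym; apply: fk_poch.
rewrite expr2; apply: eqNM; first apply: eqNM; first apply: eqNM.
- apply: P => //; lia.
- exact: P.
- apply: eqNV; [exact: poch_unit | apply: P => //; lia].
- apply: eqNV; [exact: poch_unit | apply: P => //; lia].
Qed.

Lemma theta : (phi : PS) = f2 ^+ 5 * f1^-2 * f4^-2.
Proof.
have H : (phi : PS) * f2^-1 = (f2 ^+ 2 * f1^-1 * f4^-1) ^+ 2.
  apply: eqN_eq => N.
  apply: (@eqN_trans _ _ (Sj (2 * N))); first by apply: eqN_sym; apply: Sj_approx.
  rewrite Sj_Eo; apply: eqNX; apply: Eo_approx; lia.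
have u2 : f2 \is a GRing.unit by apply: fk_unit.
rewrite -[(phi : PS)](divrK u2) H.
rewrite !exprMn !exprVn; ring.
Qed.


Lemma theta' : (phi : PS) * f1 ^+ 2 * f4 ^+ 2 = f2 ^+ 5.
Proof.
have u1 : f1 ^+ 2 \is a GRing.unit by rewrite unitrX // fk_unit.
have u4 : f4 ^+ 2 \is a GRing.unit by rewrite unitrX // fk_unit.
by rewrite theta [f2 ^+ 5 * _ * _ * _]mulrAC divrK // divrK.
Qed.

Definition g k : PS := fk (2 ^ k).
Definition D i : PS := dil (2 ^ i) phi.

Lemma g_unit k : g k \is a GRing.unit.
Proof. by apply: fk_unit; rewrite expn_gt0. Qed.

Lemma dil_theta i : D i * g i ^+ 2 * g i.+2 ^+ 2 = g i.+1 ^+ 5.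
Proof.
have h := congr1 (fun f : PS => (dil (2 ^ i) f : PS)) theta'; move: h.
have p : (0 < 2 ^ i)%N by rewrite expn_gt0.
rewrite (dilM (_ * _) (f4 ^+ 2)) // (dilM (phi : PS) (f1 ^+ 2)) // !dilX // /f1 /f2 /f4 !dil_fk // /D /g.
rewrite muln1 -expnSr -[(2 ^ i * 4)%N]/(2 ^ i * 2 ^ 2)%N -expnD addn2.
by [].
Qed.

Definition Q K : PS := \prod_(1 <= i < K.+1) D i ^+ (2 ^ (i - 1)).

Lemma Q_rel K : (1 <= K)%N -> Q K * g 1 ^+ 2 * g K.+2 ^+ (2 ^ K) = g 2 * g K.+1 ^+ (2 ^ K.+1).
Proof.
elim: K => // K IH hK.
case: (posnP K) => [K0|Kpos].
  subst K; rewrite /Q big_nat1 /= expn0 expr1.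
  have h := dil_theta 1; rewrite h.
  rewrite (_ : 2 ^ 2 = 4)%N //; ring.
have {}IH := IH Kpos.
set P := (2 ^ K)%N in IH *.
have eP1 : (2 ^ K.+1 = 2 * P)%N by rewrite expnS.
have eP2 : (2 ^ K.+2 = 4 * P)%N by rewrite !expnS mulnA.
have hQ : Q K.+1 = Q K * D K.+1 ^+ P by rewrite /Q big_nat_recr //= subn1.
rewrite hQ eP1 eP2 in IH *.
have ht := congr1 (fun f => f ^+ P) (dil_theta K.+1); move: ht => /=.
rewrite !exprMn => ht.
rewrite ![(_ * P)%N]mulnC !exprM in IH *.
have U : (g K.+2 ^+ P * g K.+1 ^+ P ^+ 2) \is a GRing.unit by rewrite unitrM !unitrX ?g_unit.
apply: (mulIr U).
set a := D K.+1 ^+ P in ht *.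
set b1 := g K.+1 ^+ P in IH ht *.
set b2 := g K.+2 ^+ P in IH ht *.
set b3 := g K.+3 ^+ P in ht *.
transitivity ((Q K * g 1 ^+ 2 * b2) * (a * b1 ^+ 2 * b3 ^+ 2)); first by ring.
by rewrite IH ht; ring.
Qed.


Lemma psexpE (f : PS) k : (psexp f k : PS) = f ^+ k.
Proof. elim: k => [|k IH]; first by rewrite expr0. by rewrite exprS -IH. Qed.

Lemma fk_big a N : (N < a)%N -> eqN N (fk a) 1.
Proof.
move=> ha; apply: (@eqN_trans _ _ (poch a N)); first by apply: fk_poch => //; lia.
apply: (@eqN_trans _ _ (\prod_(1 <= i < N.+1) (1:PS))); last by rewrite big1.
rewrite /poch big_nat_cond [X in eqN _ _ X]big_nat_cond.
apply: eqN_prod => i /andP [/andP [hi _] _]; apply: eqN_1qX.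
by apply: (leq_trans ha); rewrite leq_pmulr.
Qed.

Lemma Q_approx n : eqN n (Q n.+1) (f4 * (f2 ^+ 2)^-1).
Proof.
have h := Q_rel (ltn0Sn n).
have U : g 1 ^+ 2 * g n.+3 ^+ (2 ^ n.+1) \is a GRing.unit by rewrite unitrM !unitrX ?g_unit.
have -> : Q n.+1 = g 2 * g n.+2 ^+ (2 ^ n.+2) * (g 1 ^+ 2 * g n.+3 ^+ (2 ^ n.+1))^-1.
  by rewrite -h -[Q n.+1 * _ * _]mulrA mulrK.
have -> : f4 * (f2 ^+ 2)^-1 = g 2 * 1 ^+ (2 ^ n.+2) * (g 1 ^+ 2 * 1 ^+ (2 ^ n.+1))^-1.
  by rewrite !expr1n !mulr1.
have big k : (n <= k)%N -> eqN n (g k) 1.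
  move=> hk; apply: fk_big; apply: leq_trans (ltn_expl n (ltnSn 1)) _; rewrite leq_exp2l //.
apply: eqNM; first apply: eqNM => //.
- by apply: eqNX; apply: big; lia.
- apply: eqNV => //; apply: eqNM => //; apply: eqNX; apply: big; lia.
Qed.

Lemma phi0 : phi 0%N = 1. Proof. by rewrite /phi big_ord1. Qed.

Lemma D_near1 i m : (m < i)%N -> eqN m (D i) 1.
Proof.
move=> hi k hk; rewrite /D /dil oneE.
have hk2 : (k < 2 ^ i)%N by apply: leq_ltn_trans hk _; apply: leq_trans hi _; apply: ltnW; apply: ltn_expl.
case: (posnP k) => [->|kpos]; first by rewrite dvdn0 div0n phi0.
by case: ifP => // hd; exfalso; move: (dvdn_leq kpos hd); rewrite leqNgt hk2.
Qed.

Lemma infprod_eqN (G : nat -> PS) N : (forall i m, (m < i)%N -> eqN m (G i) 1) ->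
  eqN N (infprod G) (\prod_(1 <= i < N.+2) G i).
Proof.
move=> hG k hk; rewrite infprodE.
apply: (@prod_ext k k.+2 N.+2 G); first by apply/andP; split => //; rewrite !ltnS.
  by move=> i hi; apply: hG; apply: ltnW.
by [].
Qed.


Lemma divr_cross (a b c d : PS) : b \is a GRing.unit -> d \is a GRing.unit ->
  a * d = c * b -> a / b = c / d.
Proof.
move=> bu du h.
by rewrite -[a](mulrK du) h [c * b / d]mulrAC mulrK.
Qed.

Lemma final_alg d : f4 ^+ d.+1 * (f1 ^+ 2 * f2 ^+ (2 * d).+1)^-1 =
  (phi : PS) * (f4 * (f2 ^+ 2)^-1) ^+ d.+3.
Proof.
have u1 := fk_unit (ltn0Sn 0); have u2 : f2 \is a GRing.unit by apply: fk_unit.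
have u4 : f4 \is a GRing.unit by apply: fk_unit.
rewrite exprMn exprVn mulrA; apply: divr_cross.
- by rewrite unitrM !unitrX.
- by rewrite !unitrX.
have -> : (f2 ^+ 2) ^+ d.+3 = f2 ^+ (2 * d).+1 * f2 ^+ 5.
  by rewrite -exprM -exprD; congr (_ ^+ _); lia.
have -> : f4 ^+ d.+3 = f4 ^+ d.+1 * f4 ^+ 2 by rewrite -exprD addn2.
rewrite -theta'.
set X := f4 ^+ d.+1; set Y := f2 ^+ (2 * d).+1.
ring.
Qed.

Lemma Fbar_eq c : (3 <= c)%N ->
  (Fbar (c - 1) : PS) = f4 ^+ (c - 2) * (f1 ^+ 2 * f2 ^+ (2 * c - 5))^-1.
Proof.
move=> hc; rewrite /Fbar.
have ez : (2 * ((c - 1)%N : int) - 3) = Posz (2 * c - 5) by lia.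
rewrite ez /psexpz.
have e2 : (c - 1 - 1 = c - 2)%N by lia.
rewrite e2.
change ((psexp (fk 4) (c - 2) : PS) * psinv (psmul (psexp (fk 1) 2) (psexp (fk 2) (2 * c - 5))) =
   f4 ^+ (c - 2) * (f1 ^+ 2 * f2 ^+ (2 * c - 5))^-1).
rewrite psinvE.
  by change ((psexp (fk 4) (c - 2) : PS) * ((psexp (fk 1) 2 : PS) * (psexp (fk 2) (2 * c - 5) : PS))^-1 =
   f4 ^+ (c - 2) * (f1 ^+ 2 * f2 ^+ (2 * c - 5))^-1); rewrite !psexpE.
change (((psexp (fk 1) 2 : PS) * (psexp (fk 2) (2 * c - 5) : PS)) 0%N = 1).
rewrite !psexpE mulE big_ord1.
have c0 (f : PS) k : f 0%N = 1 -> (f ^+ k) 0%N = 1.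
  move=> h; elim: k => [|k IH]; first by rewrite expr0 oneE.
  by rewrite exprS mulE big_ord1 h IH mul1r.
by rewrite !c0 ?mul1r // fk0.
Qed.

Theorem lemma4p1 (c : nat) (hc : (3 <= c)%N) :
  forall n : nat,
    Fbar (c - 1) n =
    psmul phi (infprod (fun i => psexp (dil (2 ^ i) phi) (c * 2 ^ (i - 1)))) n.
Proof.
move=> n.
set G := (fun i => psexp (dil (2 ^ i) phi) (c * 2 ^ (i - 1))).
have GE i : (G i : PS) = (D i ^+ (2 ^ (i - 1))) ^+ c by rewrite /G psexpE mulnC exprM.
have H : eqN n (infprod G) ((f4 * (f2 ^+ 2)^-1) ^+ c).
  apply: (@eqN_trans _ _ (\prod_(1 <= i < n.+2) (G i : PS))).
    apply: infprod_eqN => i m hm; rewrite GE -(expr1n _ c) -(expr1n _ (2 ^ (i - 1))).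
    by apply: eqNX; apply: eqNX; apply: D_near1.
  have -> : \prod_(1 <= i < n.+2) (G i : PS) = Q n.+1 ^+ c.
    by rewrite /Q -prodrXl; apply: eq_bigr => i _; rewrite GE.
  apply: eqNX; exact: Q_approx.
have -> : psmul phi (infprod G) n = ((phi : PS) * (f4 * (f2 ^+ 2)^-1) ^+ c) n.
  change (((phi : PS) * (infprod G : PS)) n = ((phi : PS) * (f4 * (f2 ^+ 2)^-1) ^+ c) n).
  exact: (eqNM (@eqN_refl n phi) H (leqnn n)).
have FE := Fbar_eq hc.
change ((Fbar (c - 1) : PS) n = ((phi : PS) * (f4 * (f2 ^+ 2)^-1) ^+ c) n); rewrite FE.
have [d ->] : exists d, c = d.+3 by exists (c - 3)%N; lia.
have -> : (d.+3 - 2 = d.+1)%N by lia.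
have -> : (2 * d.+3 - 5 = (2 * d).+1)%N by lia.
by rewrite final_alg.
Qed.
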